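(* Let $f,g$ satisfy the standing assumptions below and suppose $\beta\ge\frac{2M_fQ_g}{\mu^3}$. Then for any $(x,y)\in\mathbb{R}^n\times\mathbb{R}^p$, $(x,y)$ is a $\mathcal{D}_h$-stationary point of (CDB) (i.e. $0\in\mathcal{D}_h(x,y)$) if and only if $0\in\hat{\mathcal{D}}_h(x,y)$.
   Context: Standing assumptions. (A1) Constants $M_f,\mu,L_g,Q_g>0$ exist such that: $f:\mathbb{R}^n\times\mathbb{R}^p\to\mathbb{R}$ is $M_f$-Lipschitz; $g$ is twice differentiable with $\nabla^2_{yy}g\succeq\mu I_p$; $\nabla g$ is $L_g$-Lipschitz; $\nabla^2_{yy}g,\nabla^2_{xy}g$ are $Q_g$-Lipschitz; $\nabla^2_{yy}g$ is continuously differentiable ($\nabla^2_{xy}g\in\mathbb{R}^{n\times p}$ has entries $\partial^2g/\partial x_i\partial y_j$). (A2) $f$ is a potential function of a conservative field $\mathcal{D}_f$ with compact convex values of norm at most $M_f$. Notation (all at $(x,y)$): $H=\nabla^2_{yy}g$; $\mathcal{A}(x,y):=y-H^{-1}\nabla_yg$; $\nabla^3_{xyy}g(x,y)[d]:=\lim_{t\to0}\frac1t(\nabla^2_{xy}g(x,y+td)-\nabla^2_{xy}g(x,y))$, $\nabla^3_{yyy}g(x,y)[d]:=\lim_{t\to0}\frac1t(\nabla^2_{yy}g(x,y+td)-\nabla^2_{yy}g(x,y))$; $J_{A,x}:=-\nabla^2_{xy}gH^{-1}+\nabla^3_{xyy}g[H^{-1}\nabla_yg]H^{-1}$, $J_{A,y}:=\nabla^3_{yyy}g[H^{-1}\nabla_yg]H^{-1}$;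 $\mathcal{D}_h(x,y):=\{(d_x+J_{A,x}d_y+\beta\nabla^2_{xy}g\nabla_yg,\ J_{A,y}d_y+\beta H\nabla_yg):(d_x,d_y)\in\mathcal{D}_f(x,\mathcal{A}(x,y))\}$; $\hat{\mathcal{D}}_h(x,y):=\{(d_x-\nabla^2_{xy}g(H^{-1}d_y-\beta\nabla_yg),\ \beta\nabla_yg):(d_x,d_y)\in\mathcal{D}_f(x,\mathcal{A}(x,y))\}$. *)

(* Defs.v *)
From HB Require Import structures.
From mathcomp Require Import all_boot all_order all_algebra.
From mathcomp Require Import all_classical all_reals all_analysis.
Set Implicit Arguments. Unset Strict Implicit. Unset Printing Implicit Defensive.
Import Order.TTheory GRing.Theory Num.Theory.
Import numFieldNormedType.Exports.
Local Open Scope classical_set_scope.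
Local Open Scope ring_scope.

Section Defs.
Variables (R : realType) (n p : nat).

Definition cinner (k : nat) (u v : 'cV[R]_k) : R := (u^T *m v) 0 0.
Definition cnorm (k : nat) (u : 'cV[R]_k) : R := Num.sqrt (\sum_i u i 0 ^+ 2).

Notation V := ('cV[R]_n * 'cV[R]_p)%type.

Definition pinner (u v : V) : R := cinner u.1 v.1 + cinner u.2 v.2.
Definition pnorm (u : V) : R :=
  Num.sqrt (\sum_i u.1 i 0 ^+ 2 + \sum_i u.2 i 0 ^+ 2).

Definition opnorm_le (k l : nat) (A : 'M[R]_(k, l)) (c : R) : Prop :=
  forall v : 'cV[R]_l, cnorm (A *m v) <= c * cnorm v.

Definition lipschitz_fun (L : R) (F : V -> R) : Prop :=
  forall z z' : V, `|F z - F z'| <= L * pnorm (z - z').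
Definition lipschitz_map (L : R) (F : V -> V) : Prop :=
  forall z z' : V, pnorm (F z - F z') <= L * pnorm (z - z').
Definition lipschitz_mx (k l : nat) (L : R) (F : V -> 'M[R]_(k, l)) : Prop :=
  forall z z' : V, opnorm_le (F z - F z') (L * pnorm (z - z')).

Definition convex_setV (C : set V) : Prop :=
  forall u v, C u -> C v -> forall t : R, 0 <= t <= 1 ->
    C (t *: u + (1 - t) *: v).

Definition abs_cont_curve (gamma : R -> V) : Prop :=
  forall eps : R, 0 < eps -> exists2 delta : R, 0 < delta &
    forall (N : nat) (a b : nat -> R),
      0 <= a 0%N -> (forall i, (i < N)%N -> a i <= b i) ->
      (forall i, (i.+1 < N)%N -> b i <= a i.+1) ->
      (0 < N)%N -> b N.-1 <= 1 ->
      \sum_(i < N) (b i - a i) < delta ->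
      \sum_(i < N) pnorm (gamma (b i) - gamma (a i)) < eps.

(* Bolte--Pauwels: D is a conservative field (closed graph, nonempty compact
   values, zero circulation along absolutely continuous loops) and f is a
   potential of D (path-integral formula along absolutely continuous curves). *)
Definition circulation (D : V -> set V) (gamma : R -> V) : R :=
  Rintegral lebesgue_measure `[0%R, 1%R]%classic
    (fun t => sup [set pinner (derive1 gamma t) v | v in D (gamma t)]).

Definition conservative_field (D : V -> set V) : Prop :=
  closed [set zv : V * V | D zv.1 zv.2] /\
  (forall z, D z !=set0 /\ compact (D z)) /\
  (forall gamma : R -> V, abs_cont_curve gamma -> gamma 0 = gamma 1 ->
     circulation D gamma = 0).

Definition potential_of (f : V -> R) (D : V -> set V) : Prop :=
  conservative_field D /\
  forall gamma : R -> V, abs_cont_curve gamma ->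
    f (gamma 1) = f (gamma 0) + circulation D gamma.

(* Third-order directional derivatives, defined as in the paper by limits *)
Definition d3xyy (Hxy : V -> 'M[R]_(n, p)) (z : V) (d : 'cV[R]_p)
  : 'M[R]_(n, p) :=
  lim ((fun t : R => t^-1 *: (Hxy (z.1, z.2 + t *: d) - Hxy z)) @ 0^').
Definition d3yyy (Hyy : V -> 'M[R]_p) (z : V) (d : 'cV[R]_p) : 'M[R]_p :=
  lim ((fun t : R => t^-1 *: (Hyy (z.1, z.2 + t *: d) - Hyy z)) @ 0^').

Definition Amap (grady : V -> 'cV[R]_p) (Hyy : V -> 'M[R]_p) (z : V)
  : 'cV[R]_p := z.2 - invmx (Hyy z) *m grady z.

Definition JAx (grady : V -> 'cV[R]_p) (Hxy : V -> 'M[R]_(n, p))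
  (Hyy : V -> 'M[R]_p) (z : V) : 'M[R]_(n, p) :=
  - Hxy z *m invmx (Hyy z)
  + d3xyy Hxy z (invmx (Hyy z) *m grady z) *m invmx (Hyy z).

Definition JAy (grady : V -> 'cV[R]_p) (Hyy : V -> 'M[R]_p) (z : V)
  : 'M[R]_p :=
  d3yyy Hyy z (invmx (Hyy z) *m grady z) *m invmx (Hyy z).

Definition Dh (Df : V -> set V) (grady : V -> 'cV[R]_p)
  (Hxy : V -> 'M[R]_(n, p)) (Hyy : V -> 'M[R]_p) (beta : R) (z : V)
  : set V :=
  [set (d.1 + JAx grady Hxy Hyy z *m d.2 + beta *: (Hxy z *m grady z),
        JAy grady Hyy z *m d.2 + beta *: (Hyy z *m grady z))
   | d in Df (z.1, Amap grady Hyy z)].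

Definition Dhat (Df : V -> set V) (grady : V -> 'cV[R]_p)
  (Hxy : V -> 'M[R]_(n, p)) (Hyy : V -> 'M[R]_p) (beta : R) (z : V)
  : set V :=
  [set (d.1 - Hxy z *m (invmx (Hyy z) *m d.2 - beta *: grady z),
        beta *: grady z)
   | d in Df (z.1, Amap grady Hyy z)].

End Defs.

(* Main.v *)
Require Import Defs.
From HB Require Import structures.
From mathcomp Require Import all_boot all_order all_algebra.
From mathcomp Require Import all_classical all_reals all_analysis.
From mathcomp Require Import ring lra.
Import Order.TTheory GRing.Theory Num.Theory.
Import numFieldNormedType.Exports.
Local Open Scope classical_set_scope.
Local Open Scope ring_scope.

Section Aux.
Variable R : realType.

Lemma cinner_sum k (u v : 'cV[R]_k) : cinner u v = \sum_i u i 0 * v i 0.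
Proof. by rewrite /cinner mxE; apply: eq_bigr => i _; rewrite mxE. Qed.

Lemma cinnerC k (u v : 'cV[R]_k) : cinner u v = cinner v u.
Proof. by rewrite !cinner_sum; apply: eq_bigr => i _; rewrite mulrC. Qed.

Lemma cinnerDr k (u v w : 'cV[R]_k) : cinner u (v + w) = cinner u v + cinner u w.
Proof. by rewrite !cinner_sum -big_split; apply: eq_bigr => i _; rewrite mxE mulrDr. Qed.

Lemma cinnerZr k (a : R) (u v : 'cV[R]_k) : cinner u (a *: v) = a * cinner u v.
Proof. by rewrite !cinner_sum mulr_sumr; apply: eq_bigr => i _; rewrite mxE mulrCA. Qed.

Lemma cinnerNr k (u v : 'cV[R]_k) : cinner u (- v) = - cinner u v.
Proof. by rewrite -scaleN1r cinnerZr mulN1r. Qed.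

Lemma cinnerBr k (u v w : 'cV[R]_k) : cinner u (v - w) = cinner u v - cinner u w.
Proof. by rewrite cinnerDr cinnerNr. Qed.

Lemma cinnerDl k (u v w : 'cV[R]_k) : cinner (v + w) u = cinner v u + cinner w u.
Proof. by rewrite !(cinnerC _ _ u) cinnerDr. Qed.

Lemma cinnerZl k (a : R) (u v : 'cV[R]_k) : cinner (a *: v) u = a * cinner v u.
Proof. by rewrite !(cinnerC _ _ u) cinnerZr. Qed.

Lemma cinnerBl k (u v w : 'cV[R]_k) : cinner (v - w) u = cinner v u - cinner w u.
Proof. by rewrite !(cinnerC _ _ u) cinnerBr. Qed.

Lemma cinner0r k (u : 'cV[R]_k) : cinner u 0 = 0.
Proof. by rewrite -(scale0r 0) cinnerZr mul0r. Qed.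

Lemma cinner_ge0 k (v : 'cV[R]_k) : 0 <= cinner v v.
Proof. by rewrite cinner_sum; apply: sumr_ge0 => i _; rewrite -expr2 sqr_ge0. Qed.

Lemma cinner_eq0 k (v : 'cV[R]_k) : cinner v v = 0 -> v = 0.
Proof.
rewrite cinner_sum => /eqP; rewrite psumr_eq0; last first.
  by move=> i _; rewrite -expr2 sqr_ge0.
move=> /allP H; apply/matrixP => i j; rewrite (ord1 j) mxE.
by have := H i (mem_index_enum _); rewrite -expr2 sqrf_eq0 => /eqP.
Qed.

Lemma cnormE k (v : 'cV[R]_k) : cnorm v = Num.sqrt (cinner v v).
Proof. by rewrite /cnorm cinner_sum; congr Num.sqrt; apply: eq_bigr => i _; rewrite expr2. Qed.

Lemma cnorm_ge0 k (v : 'cV[R]_k) : 0 <= cnorm v.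
Proof. exact: sqrtr_ge0. Qed.

Lemma cnorm_sq k (v : 'cV[R]_k) : cnorm v ^+ 2 = cinner v v.
Proof. by rewrite cnormE sqr_sqrtr // cinner_ge0. Qed.

Lemma cnorm_eq0 k (v : 'cV[R]_k) : cnorm v = 0 -> v = 0.
Proof. by move=> h; apply: cinner_eq0; rewrite -cnorm_sq h expr0n. Qed.

Lemma CS2 k (a b : 'cV[R]_k) : cinner a b ^+ 2 <= cinner a a * cinner b b.
Proof.
set A := cinner a a; set B := cinner b b; set C := cinner a b.
have h := @cinner_ge0 k (B *: a - C *: b).
rewrite !(cinnerBl, cinnerBr, cinnerZl, cinnerZr) -/A -/B -/C (cinnerC _ b a) -/C in h.
have B0 : 0 <= B by apply: cinner_ge0.
have [Be|Bn] := eqVneq B 0.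
  have b0 : b = 0 by apply: cinner_eq0.
  by rewrite /C b0 cinner0r expr0n /= mulr_ge0 // cinner_ge0.
have Bp : 0 < B by rewrite lt0r Bn.
have : 0 <= B * (A * B - C ^+ 2) by nra.
by rewrite pmulr_rge0 // subr_ge0.
Qed.

Lemma CS k (a b : 'cV[R]_k) : `|cinner a b| <= cnorm a * cnorm b.
Proof.
rewrite !cnormE -sqrtrM ?cinner_ge0 // -sqrtr_sqr ler_sqrt ?CS2 //.
by rewrite mulr_ge0 ?cinner_ge0.
Qed.

Lemma cnormZ k (c : R) (v : 'cV[R]_k) : cnorm (c *: v) = `|c| * cnorm v.
Proof.
by rewrite !cnormE cinnerZl cinnerZr mulrA -expr2 sqrtrM ?sqr_ge0 // sqrtr_sqr.
Qed.


Lemma cont_phi k l (a : 'cV[R]_k) (w : 'cV[R]_l) :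
  continuous (fun M : 'M[R]_(k,l) => cinner a (M *m w)).
Proof.
have -> : (fun M : 'M[R]_(k,l) => cinner a (M *m w)) =
   (fun M => \sum_i \sum_j (a i 0 * w j 0) * M i j).
  apply: funext => M; rewrite cinner_sum; apply: eq_bigr => i _.
  rewrite mxE mulr_sumr; apply: eq_bigr => j _; rewrite mulrCA mulrA.
  by rewrite -mulrA mulrC.
apply: (continuous_big (op := +%R) (x0 := 0) (P := xpredT)) => [|i _]; first exact: add_continuous.
apply: (continuous_big (op := +%R) (x0 := 0) (P := xpredT)) => [|j _]; first exact: add_continuous.
move=> M; apply: (@continuousM _ _ (fun=> a i 0 * w j 0) (fun M : 'M[R]_(k,l) => M i j)); first exact: cst_continuous.
exact: coord_continuous.
Qed.

Variables (n p : nat).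
Lemma pair_shift (t : R) (u : 'cV[R]_p) (z : 'cV[R]_n * 'cV[R]_p) :
  t *: ((0 : 'cV[R]_n), u) + z = (z.1, z.2 + t *: u).
Proof. case: z => z1 z2; change ((t *: (0:'cV[R]_n) + z1, t *: u + z2) = (z1, z2 + t *: u)). by rewrite scaler0 add0r addrC. Qed.

Lemma pnorm_0v (u : 'cV[R]_p) : pnorm ((0 : 'cV[R]_n), u) = cnorm u.
Proof.
rewrite /pnorm /cnorm /= big1 ?add0r // => i _; rewrite mxE expr0n //.
Qed.

Lemma pnorm_ge2 (d : 'cV[R]_n * 'cV[R]_p) : cnorm d.2 <= pnorm d.
Proof.
rewrite /pnorm /cnorm; apply: ler_wsqrtr; rewrite lerDr.
by apply: sumr_ge0 => i _; rewrite sqr_ge0.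
Qed.

Lemma d3yyy0 (Hyy : 'cV[R]_n * 'cV[R]_p -> 'M[R]_p) z : d3yyy Hyy z 0 = 0.
Proof.
rewrite /d3yyy.
have -> : (fun t : R => t^-1 *: (Hyy (z.1, z.2 + t *: 0) - Hyy z)) = fun=> 0.
  by apply: funext => t; rewrite scaler0 addr0 -surjective_pairing subrr scaler0.
exact: lim_cst.
Qed.

Lemma d3xyy0 (Hxy : 'cV[R]_n * 'cV[R]_p -> 'M[R]_(n,p)) z : d3xyy Hxy z 0 = 0.
Proof.
rewrite /d3xyy.
have -> : (fun t : R => t^-1 *: (Hxy (z.1, z.2 + t *: 0) - Hxy z)) = fun=> 0.
  by apply: funext => t; rewrite scaler0 addr0 -surjective_pairing subrr scaler0.
exact: lim_cst.
Qed.

Lemma d3_bound (Hyy : 'cV[R]_n * 'cV[R]_p -> 'M[R]_p) (Qg : R) z u w a :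
  differentiable Hyy z -> lipschitz_mx Qg Hyy -> 0 <= Qg ->
  `|cinner a (d3yyy Hyy z u *m w)| <= cnorm a * (Qg * cnorm u * cnorm w).
Proof.
move=> hd hL Q0.
have hc := @diff_derivable _ _ _ Hyy z ((0 : 'cV[R]_n), u) hd.
rewrite /derivable in hc.
have E : (fun h : R => h^-1 *: ((Hyy \o shift z) (h *: ((0 : 'cV[R]_n), u)) - Hyy z))
   = (fun t : R => t^-1 *: (Hyy (z.1, z.2 + t *: u) - Hyy z)).
  by apply: funext => t /=; rewrite /shift pair_shift.
rewrite E in hc.
set F := (fun t : R => t^-1 *: (Hyy (z.1, z.2 + t *: u) - Hyy z)) in hc E.
set psi := fun M : 'M[R]_p => (`|cinner a (M *m w)| : R).
have cpsi : continuous psi.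
  move=> M; apply: (continuous_comp (f := fun M : 'M[R]_p => cinner a (M *m w)) (g := Num.norm)); [exact: cont_phi | exact: norm_continuous].
have hc2 : (psi \o F) @ 0^' --> psi (d3yyy Hyy z u).
  apply: continuous_cvg; [exact: cpsi | rewrite /d3yyy -/F; exact: hc].
suff HH : \forall t \near 0^', [set x : R | x <= cnorm a * (Qg * cnorm u * cnorm w)] ((psi \o F) t).
  exact: (closed_cvg _ (@closed_le R (cnorm a * (Qg * cnorm u * cnorm w))) HH _ hc2).
near=> t.
have t0 : t != 0 by near: t; exact: nbhs_dnbhs_neq.
rewrite /psi /F /=.
apply: le_trans (CS _ _ _) _; apply: ler_wpM2l; first exact: cnorm_ge0.
rewrite -scalemxAl cnormZ.
have hb := hL (z.1, z.2 + t *: u) z w.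
have E2 : (z.1, z.2 + t *: u) - z = ((0 : 'cV[R]_n), t *: u).
  clear -t; case: z => z1 z2 /=.
  change ((z1 - z1, z2 + t *: u - z2) = ((0 : 'cV[R]_n), t *: u)).
  by rewrite subrr addrC addKr.
rewrite E2 pnorm_0v cnormZ in hb.
have ta : 0 < `|t| by rewrite normr_gt0.
rewrite normfV; apply: (le_trans (ler_wpM2l _ hb)); first by rewrite invr_ge0 normr_ge0.
rewrite !mulrA [_ * Qg]mulrC -!mulrA mulKf ?gt_eqF //.
Unshelve. all: by end_near.
Qed.


Lemma cnorm0 k : cnorm (0 : 'cV[R]_k) = 0.
Proof. by rewrite cnormE cinner0r sqrtr0. Qed.

Lemma Hquad k (A : 'M[R]_k) mu v :
  (forall v, 0 <= cinner v ((A - mu%:M) *m v)) -> mu * cinner v v <= cinner v (A *m v).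
Proof. by move=> h; have := h v; rewrite mulmxBl mul_scalar_mx cinnerBr cinnerZr subr_ge0. Qed.

Lemma Hlow k (A : 'M[R]_k) mu v : 0 < mu ->
  (forall v, 0 <= cinner v ((A - mu%:M) *m v)) -> mu * cnorm v <= cnorm (A *m v).
Proof.
move=> mu0 h; have q := @Hquad k A mu v h.
have cs := @CS k v (A *m v).
have c0 := @cnorm_ge0 k v; have d0 := @cnorm_ge0 k (A *m v).
rewrite -cnorm_sq in q.
have q2 : mu * cnorm v ^+ 2 <= cnorm v * cnorm (A *m v).
  by apply: le_trans q _; apply: le_trans (ler_norm _) cs.
have [ce|cp] := eqVneq (cnorm v) 0; first by rewrite ce mulr0.
have cpos : 0 < cnorm v by rewrite lt0r cp.
have : 0 <= cnorm v * (cnorm (A *m v) - mu * cnorm v) by nra.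
by rewrite pmulr_rge0 // subr_ge0.
Qed.

Lemma Hunit k (A : 'M[R]_k) mu : 0 < mu ->
  (forall v, 0 <= cinner v ((A - mu%:M) *m v)) -> A \in unitmx.
Proof.
move=> mu0 h; rewrite -row_full_unit -cokermx_eq0; apply/eqP/matrixP => i j.
have hj : A *m (cokermx A *m delta_mx j (ord0 : 'I_1)) = 0 by rewrite mulmxA mulmx_coker mul0mx.
have hl := @Hlow k A mu (cokermx A *m delta_mx j (ord0 : 'I_1)) mu0 h.
rewrite hj cnorm0 in hl.
have : cnorm (cokermx A *m delta_mx j (ord0 : 'I_1)) = 0.
  apply/eqP; rewrite eq_le cnorm_ge0 andbT.
  by rewrite -(pmulr_rle0 _ mu0).
move/cnorm_eq0/matrixP/(_ i 0); rewrite -colE !mxE => ->.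
by [].
Qed.

Lemma arith (mu Mf Qg beta c U W : R) : 0 < mu -> 0 < Mf -> 0 < Qg ->
  2 * Mf * Qg / mu ^+ 3 <= beta -> 0 <= c -> 0 <= U -> 0 <= W ->
  mu * U <= c -> mu * W <= Mf -> beta * (mu * c ^+ 2) <= c * (Qg * U * W) -> c = 0.
Proof.
move=> mu0 M0 Q0 hb c0 U0 W0 hU hW h.
have mu3 : 0 < mu ^+ 3 by rewrite exprn_gt0.
have hb2 : 2 * Mf * Qg <= beta * mu ^+ 3 by rewrite -ler_pdivrMr.
have b0 : 0 < beta.
  apply: lt_le_trans hb; rewrite divr_gt0 // mulr_gt0 // mulr_gt0 //.
have e1 : mu * U * (mu * W) <= c * Mf.
  by apply: ler_pM => //; rewrite mulr_ge0 // ltW.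
have c2 : 0 <= c ^+ 2 by rewrite sqr_ge0.
have e2 : beta * mu ^+ 3 * c ^+ 2 <= c * Qg * (mu * U * (mu * W)).
  have E : beta * mu ^+ 3 * c ^+ 2 = beta * (mu * c ^+ 2) * mu ^+ 2 by ring.
  have E' : c * Qg * (mu * U * (mu * W)) = c * (Qg * U * W) * mu ^+ 2 by ring.
  by rewrite E E' ler_wpM2r // sqr_ge0.
have e3 : c * Qg * (mu * U * (mu * W)) <= c * Qg * (c * Mf).
  by rewrite ler_wpM2l // mulr_ge0 // ltW.
have e4 : 2 * Mf * Qg * c ^+ 2 <= beta * mu ^+ 3 * c ^+ 2 by rewrite ler_wpM2r.
have E5 : c * Qg * (c * Mf) = Mf * Qg * c ^+ 2 by ring.
have f : Mf * Qg * c ^+ 2 <= 0.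
  have := le_trans e4 (le_trans e2 e3); rewrite E5; lra.
have MQ : 0 < Mf * Qg by rewrite mulr_gt0.
have : c ^+ 2 <= 0 by rewrite -(pmulr_rle0 _ MQ).
move=> h3; have : c ^+ 2 == 0 by rewrite eq_le h3 c2.
by rewrite sqrf_eq0 => /eqP.
Qed.
End Aux.

Theorem proposition4p3 (R : realType) (n p : nat)
  (f g : 'cV[R]_n * 'cV[R]_p -> R)
  (Df : 'cV[R]_n * 'cV[R]_p -> set ('cV[R]_n * 'cV[R]_p))
  (gradx : 'cV[R]_n * 'cV[R]_p -> 'cV[R]_n)
  (grady : 'cV[R]_n * 'cV[R]_p -> 'cV[R]_p)
  (Hxy : 'cV[R]_n * 'cV[R]_p -> 'M[R]_(n, p))
  (Hyy : 'cV[R]_n * 'cV[R]_p -> 'M[R]_p)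
  (Mf mu Lg Qg beta : R) :
  (* (A1) *)
  0 < Mf -> 0 < mu -> 0 < Lg -> 0 < Qg ->
  lipschitz_fun Mf f ->
  (* g differentiable with gradient (gradx, grady) *)
  (forall z, differentiable g z /\
     forall h, 'd g z h = cinner (gradx z) h.1 + cinner (grady z) h.2) ->
  (* g twice differentiable; Hxy, Hyy are the blocks of its Hessian *)
  (forall z, differentiable gradx z /\ differentiable grady z /\
     forall h, 'd grady z h = (Hxy z)^T *m h.1 + Hyy z *m h.2) ->
  (forall z (v : 'cV[R]_p), 0 <= cinner v ((Hyy z - mu%:M) *m v)) ->
  lipschitz_map Lg (fun z => (gradx z, grady z)) ->
  lipschitz_mx Qg Hyy ->
  lipschitz_mx Qg Hxy ->
  (forall z, differentiable Hyy z) ->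
  (forall h, continuous (fun z => 'd Hyy z h)) ->
  (* (A2) *)
  potential_of f Df ->
  (forall z, convex_setV (Df z)) ->
  (forall z v, Df z v -> pnorm v <= Mf) ->
  (* step-size condition *)
  2 * Mf * Qg / mu ^+ 3 <= beta ->
  forall (x : 'cV[R]_n) (y : 'cV[R]_p),
    Dh Df grady Hxy Hyy beta (x, y) 0 <-> Dhat Df grady Hxy Hyy beta (x, y) 0.
Proof.
move=> M0 mu0 _ Q0 _ _ _ hpos _ hLyy _ hdiff _ _ _ hbnd hb x y.
set z := (x, y).
set H := Hyy z; set gz := grady z.
have hU : H \in unitmx := @Hunit R p H mu mu0 (hpos z).
have b0 : 0 < beta.
  apply: lt_le_trans hb; rewrite divr_gt0 ?exprn_gt0 // mulr_gt0 // mulr_gt0 //.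
split.
- case=> d hd e.
  have e1 := congr1 fst e; have e2 := congr1 snd e; simpl in e1, e2.
  rewrite /JAy -/H -/gz in e2.
  set u := invmx H *m gz in e2.
  set w := invmx H *m d.2.
  set D := d3yyy Hyy z u in e2.
  have e3 : cinner gz (D *m w) + beta * cinner gz (H *m gz) = 0.
    by rewrite -cinnerZr -cinnerDr /w mulmxA e2 cinner0r.
  have b1 := @d3_bound R n p Hyy Qg z u w gz (hdiff z) hLyy (ltW Q0).
  have b2 := @Hquad R p H mu gz (hpos z).
  have b3 := @Hlow R p H mu u mu0 (hpos z).
  have b4 := @Hlow R p H mu w mu0 (hpos z).
  rewrite /u mulKVmx // in b3.
  rewrite /w mulKVmx // in b4.
  have d2M : cnorm d.2 <= Mf := le_trans (@pnorm_ge2 R n p d) (hbnd _ _ hd).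
  have g0 : gz = 0.
    apply: cnorm_eq0.
    apply: (@arith R mu Mf Qg beta (cnorm gz) (cnorm u) (cnorm w)) => //.
    + exact: cnorm_ge0.
    + exact: cnorm_ge0.
    + exact: cnorm_ge0.
    + exact: le_trans b4 d2M.
    + rewrite cnorm_sq; apply: le_trans (ler_wpM2l (ltW b0) b2) _.
      have -> : beta * cinner gz (H *m gz) = - cinner gz (D *m w) by lra.
      by apply: le_trans b1; rewrite -normrN ler_norm.
  exists d => //.
  have u0 : u = 0 by rewrite /u g0 mulmx0.
  move: e1; rewrite /JAx -/H -/gz g0 !mulmx0 d3xyy0 !mul0mx !scaler0 !addr0 subr0.
  move=> e1.
  have -> : d.1 - Hxy z *m (invmx H *m d.2) = 0 by move: e1; rewrite !mulNmx mulmxA. by [].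
- case=> d hd e.
  have e1 := congr1 fst e; have e2 := congr1 snd e; simpl in e1, e2.
  have g0 : gz = 0.
    by move: e2; rewrite -/gz => /eqP; rewrite scaler_eq0 gt_eqF //= => /eqP.
  exists d => //.
  rewrite /JAx /JAy -/H -/gz g0 !mulmx0 d3xyy0 d3yyy0 !mul0mx !scaler0 !addr0.
  have -> : d.1 + - Hxy z *m invmx H *m d.2 = 0.
    by move: e1; rewrite -/H -/gz g0 scaler0 subr0 !mulNmx mulmxA.
  by [].
Qed.
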